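(* For all positive integers $n$, $\det A(n)=1$.
   Context: For a positive integer $n$, the $n\times n$ matrix $A(n)=(A_{n,i,j})_{0\le i,j\le n-1}$ (entries rational functions in indeterminates $x,y$) is defined by $A_{n,i,j}=\frac{(1+x)(1+y)}{xy}$ if $i=j<n-1$; $A_{n,i,j}=-\frac1{xy}$ if $i=j-1<n-1$; $A_{n,n-1,n-1}=\frac{xy-(n-1)(x+y)}{xy}$; for $i=n-1$ and $j<n-1$, $$A_{n,n-1,j}=\frac{(-1)^{n+j}}{xy}\sum_{l=j}^{n}\left(\binom lj\binom{n+j-1-l}{j}x^{l-j}y^{n-1-l}+\binom lj\binom{n+j-l}{j}x^{l-j}y^{n-l}\right);$$ and $A_{n,i,j}=0$ otherwise. Binomial coefficients $\binom ab$ are $0$ if $b<0$ or $a<b$. *)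

(* Defs.v *)
(* The field Q(x,y) of rational functions in two
   indeterminates is {fraction {poly {poly rat}}}, with x the inner
   variable ('X%:P) and y the outer variable ('X). *)
From HB Require Import structures.
From mathcomp Require Import all_boot all_order all_algebra.
Set Implicit Arguments. Unset Strict Implicit. Unset Printing Implicit Defensive.
Import Order.TTheory GRing.Theory Num.Theory.
Local Open Scope ring_scope.

Definition Fxy := {fraction {poly {poly rat}}}.
Definition xF : Fxy := FracField.tofrac ('X%:P : {poly {poly rat}}).
Definition yF : Fxy := FracField.tofrac ('X : {poly {poly rat}}).

Definition binZ (a b : int) : nat :=
  match a, b with
  | Posz a', Posz b' => 'C(a', b')
  | _, _ => 0%N
  end.

(* The summand of the last row, l ranging over j..n; exponents are in int
   (exprz) since n-1-l may be -1 (the corresponding binomial is then 0). *)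
Definition lastrow_term (n j l : nat) : Fxy :=
  (binZ l j * binZ (n%:Z + j%:Z - 1 - l%:Z) j)%:R
     * xF ^ (l%:Z - j%:Z) * yF ^ (n%:Z - 1 - l%:Z)
  + (binZ l j * binZ (n%:Z + j%:Z - l%:Z) j)%:R
     * xF ^ (l%:Z - j%:Z) * yF ^ (n%:Z - l%:Z).

Definition Aentry (n i j : nat) : Fxy :=
  if (i == j) && (i < n.-1)%N then (1 + xF) * (1 + yF) / (xF * yF)
  else if (i.+1 == j) && (i < n.-1)%N then - (xF * yF)^-1
  else if (i == n.-1) && (j == n.-1) then (xF * yF - (n.-1)%:R * (xF + yF)) / (xF * yF)
  else if (i == n.-1) && (j < n.-1)%N then
    (-1) ^+ (n + j) / (xF * yF) * \sum_(j <= l < n.+1) lastrow_term n j l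
  else 0.

Definition A (n : nat) : 'M[Fxy]_n := \matrix_(i < n, j < n) Aentry n i j.

(* Main.v *)
Require Import Defs.
From HB Require Import structures.
From mathcomp Require Import all_boot all_order all_algebra.
From mathcomp Require Import zify ring.
Set Implicit Arguments. Unset Strict Implicit. Unset Printing Implicit Defensive.
Import Order.TTheory GRing.Theory Num.Theory.
Local Open Scope ring_scope.
Definition eqN (R : comNzRingType) (N : nat) (p q : {poly R}) : bool :=
  [forall i : 'I_N, p`_i == q`_i].

Lemma eqNP (R : comNzRingType) (N : nat) (p q : {poly R}) :
  reflect (forall i, (i < N)%N -> p`_i = q`_i) (eqN N p q).
Proof.
apply: (iffP forallP) => h.
  by move=> i hi; apply/eqP; exact: (h (Ordinal hi)).
by move=> i; apply/eqP; apply: h.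
Qed.

Lemma eqN_refl (R : comNzRingType) N (p : {poly R}) : eqN N p p.
Proof. by apply/eqNP. Qed.
Lemma eqN_sym (R : comNzRingType) N (p q : {poly R}) : eqN N p q -> eqN N q p.
Proof. by move/eqNP=> h; apply/eqNP=> i hi; rewrite h. Qed.
Lemma eqN_trans (R : comNzRingType) N (p q r : {poly R}) :
  eqN N p q -> eqN N q r -> eqN N p r.
Proof. by move/eqNP=> h1 /eqNP h2; apply/eqNP=> i hi; rewrite h1 ?h2. Qed.
Lemma eqN_add (R : comNzRingType) N (p q p' q' : {poly R}) :
  eqN N p p' -> eqN N q q' -> eqN N (p + q) (p' + q').
Proof. by move/eqNP=> h1 /eqNP h2; apply/eqNP=> i hi; rewrite !coefD h1 ?h2. Qed.
Lemma eqN_mull (R : comNzRingType) N (r p q : {poly R}) :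
  eqN N p q -> eqN N (r * p) (r * q).
Proof.
move/eqNP=> h; apply/eqNP=> i hi; rewrite !coefM; apply: eq_bigr => j _; rewrite h //.
exact: leq_ltn_trans (leq_subr j i) hi.
Qed.
Lemma eqN_mul (R : comNzRingType) N (p q p' q' : {poly R}) :
  eqN N p p' -> eqN N q q' -> eqN N (p * q) (p' * q').
Proof.
move=> h1 h2; apply: eqN_trans (eqN_mull p h2) _.
by rewrite mulrC [p' * _]mulrC; apply: eqN_mull.
Qed.
Lemma eqN_sum (R : comNzRingType) N k (F G : nat -> {poly R}) :
  (forall j, (j < k)%N -> eqN N (F j) (G j)) ->
  eqN N (\sum_(j < k) F j) (\sum_(j < k) G j).
Proof.
move=> h; apply/eqNP=> i hi; rewrite !coef_sum; apply: eq_bigr => j _; exact/eqNP/hi/h.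
Qed.
Lemma eqN_Xn (R : comNzRingType) N (p : {poly R}) : eqN N ('X^N * p) 0.
Proof. by apply/eqNP=> i hi; rewrite coefXnM hi coef0. Qed.

Definition gser (R : comNzRingType) (c : R) (j N : nat) : {poly R} :=
  \poly_(a < N) ('C(j + a, a)%:R * c ^+ a).

Lemma coef_lin (R : comNzRingType) (c : R) (p : {poly R}) i :
  ((1 - c%:P * 'X) * p)`_i = p`_i - (if i is i'.+1 then c * p`_i' else 0).
Proof.
rewrite mulrBl mul1r -mulrA coefB coefCM coefXM.
by case: i => [|i]; rewrite ?mulr0.
Qed.

Lemma gser_rec (R : comNzRingType) (c : R) j N :
  eqN N ((1 - c%:P * 'X) * gser c j.+1 N) (gser c j N).
Proof.
apply/eqNP=> i hi; rewrite coef_lin !coef_poly hi.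
case: i hi => [|i] hi; first by rewrite !bin0 subr0.
rewrite coef_poly (ltnW hi) exprS.
have -> : (j.+1 + i.+1 = (j + i.+1).+1)%N by rewrite addSn.
have -> : (j.+1 + i = j + i.+1)%N by rewrite addSn addnS.
rewrite binS natrD; ring.
Qed.

Lemma gser0 (R : comNzRingType) (c : R) N :
  eqN N ((1 - c%:P * 'X) * gser c 0 N) 1.
Proof.
apply/eqNP=> i hi; rewrite coef_lin !coef_poly hi coef1.
case: i hi => [|i] hi; first by rewrite subr0 expr0 mulr1.
rewrite coef_poly (ltnW hi) !add0n !binn exprS /=; ring.
Qed.

Definition Dser (R : comNzRingType) (x y : R) j N := gser x j N * gser y j N.
Definition Pp (R : comNzRingType) (x y : R) : {poly R} :=
  (1 - x%:P * 'X) * (1 - y%:P * 'X).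
Definition Gser (R : comNzRingType) (x y : R) N : {poly R} :=
  \sum_(j < N) ((- ((1 + x) * (1 + y))) ^+ j)%:P * 'X^j * Dser x y j N.

Lemma D_rec (R : comNzRingType) (x y : R) j N :
  eqN N (Pp x y * Dser x y j.+1 N) (Dser x y j N).
Proof.
rewrite /Pp /Dser.
have -> : (1 - x%:P * 'X) * (1 - y%:P * 'X) * (gser x j.+1 N * gser y j.+1 N)
  = ((1 - x%:P * 'X) * gser x j.+1 N) * ((1 - y%:P * 'X) * gser y j.+1 N) by ring.
apply: eqN_mul; exact: gser_rec.
Qed.

Lemma D0 (R : comNzRingType) (x y : R) N :
  eqN N (Pp x y * Dser x y 0 N) 1.
Proof.
rewrite /Pp /Dser.
have -> : (1 - x%:P * 'X) * (1 - y%:P * 'X) * (gser x 0 N * gser y 0 N)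
  = ((1 - x%:P * 'X) * gser x 0 N) * ((1 - y%:P * 'X) * gser y 0 N) by ring.
by have := eqN_mul (@gser0 _ x N) (@gser0 _ y N); rewrite mulr1.
Qed.

Lemma G_main (R : comNzRingType) (x y : R) N :
  eqN N.+1 ((Pp x y + ((1 + x) * (1 + y))%:P * 'X) * Gser x y N.+1) 1.
Proof.
set u := (1 + x) * (1 + y).
set c := fun j => ((- u) ^+ j)%:P : {poly R}.
set E := fun j => if j is j'.+1 then Dser x y j' N.+1 else 1.
rewrite /Gser mulr_sumr.
have -> : \sum_(i < N.+1) (Pp x y + u%:P * 'X) *
      (((- u) ^+ i)%:P * 'X^i * Dser x y i N.+1) =
   \sum_(i < N.+1) (c i * 'X^i * (Pp x y * Dser x y i N.+1)) +
   \sum_(i < N.+1) (c i * u%:P * ('X^i * 'X) * Dser x y i N.+1).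
  rewrite -big_split; apply: eq_bigr => i _ /=; rewrite /c; ring.
apply: (eqN_trans (q := (\sum_(i < N.+1) (c i * 'X^i * E i) +
   \sum_(i < N.+1) (c i * u%:P * ('X^i * 'X) * Dser x y i N.+1)))).
  apply: eqN_add; last exact: eqN_refl.
  apply: (eqN_sum (F := fun i => c i * 'X^i * (Pp x y * Dser x y i N.+1)) (G := fun i => c i * 'X^i * E i)) => j _; apply: eqN_mull.
  case: j => [|j]; [exact: D0 | exact: D_rec].
rewrite big_ord_recl big_ord_recr /= /c expr0 mulr1 mul1r.
have -> : \sum_(i < N) (((- u) ^+ (bump 0 i))%:P * 'X^(bump 0 i) * E (bump 0 i))
  = - \sum_(i < N) (((- u) ^+ i)%:P * u%:P * ('X^i * 'X) * Dser x y i N.+1).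
  rewrite -sumrN; apply: eq_bigr => i _.
  rewrite /bump /= add1n exprS exprSr rmorphM rmorphN /=; ring.
have -> : forall a d : {poly R}, 1 + - a + (a + d) = 1 + d by move=> *; ring.
apply/eqNP=> i hi; rewrite coefD -exprSr -mulrA mulrC -mulrA coefXnM hi addr0 //.
Qed.

Lemma Pp_fact (R : comNzRingType) (x y : R) :
  Pp x y + ((1 + x) * (1 + y))%:P * 'X = (1 + 'X) * (1 + (x * y)%:P * 'X).
Proof. rewrite /Pp !(polyCM, polyCD, polyC1); ring. Qed.

Lemma coef_lin2 (R : comNzRingType) (c : R) (p : {poly R}) i :
  ((1 + c%:P * 'X) * p)`_i = p`_i + (if i is i'.+1 then c * p`_i' else 0).
Proof.
rewrite mulrDl mul1r -mulrA coefD coefCM coefXM.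
by case: i => [|i]; rewrite ?mulr0.
Qed.

Lemma H_coef (R : comNzRingType) (x y : R) N i : (i < N.+1)%N ->
  ((1 + 'X) * Gser x y N.+1)`_i = (- (x * y)) ^+ i.
Proof.
have h := G_main x y N; rewrite Pp_fact -mulrA mulrC -mulrA in h.
rewrite mulrC.
move/eqNP: h => h.
elim: i => [|i IH] hi.
  by have := h 0%N hi; rewrite coef_lin2 addr0 coef1 expr0.
have := h i.+1 hi; rewrite coef_lin2 IH ?(ltnW hi) // coef1 /= => e.
move: e; rewrite exprS => e; apply/eqP; rewrite -subr_eq0; apply/eqP; rewrite -[RHS](mulr0n 1) -e; ring.
Qed.

Definition Dc (R : comNzRingType) (x y : R) j k :=
  \sum_(a < k.+1) ('C(j + a, a)%:R * x ^+ a * ('C(j + (k - a), k - a)%:R * y ^+ (k - a))).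

Lemma Dser_coef (R : comNzRingType) (x y : R) j N k : (k < N)%N ->
  (Dser x y j N)`_k = Dc x y j k.
Proof.
move=> hk; rewrite /Dser coefM /Dc; apply: eq_bigr => [[a ha]] _ /=.
rewrite !coef_poly.
have -> : (a < N)%N by exact: leq_ltn_trans (ha : a <= k)%N hk.
by have -> : (k - a < N)%N by exact: leq_ltn_trans (leq_subr a k) hk.
Qed.

Lemma G_coef (R : comNzRingType) (x y : R) N m :
  (Gser x y N)`_m = \sum_(j < N) (- ((1 + x) * (1 + y))) ^+ j *
      (if (m < j)%N then 0 else (Dser x y j N)`_(m - j)).
Proof.
rewrite /Gser coef_sum; apply: eq_bigr => j _.
by rewrite -mulrA coefCM coefXnM.
Qed.

Lemma series_id (R : comNzRingType) (x y : R) n : (0 < n)%N ->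
  \sum_(j < n.+1) (- ((1 + x) * (1 + y))) ^+ j *
     (Dc x y j (n - j) + (if (j < n)%N then Dc x y j (n.-1 - j) else 0))
  = (- (x * y)) ^+ n.
Proof.
move=> n0; rewrite -(@H_coef _ x y n n) //.
rewrite [in RHS]mulrDl mul1r coefD coefXM; case: n n0 => // n _ /=.
rewrite !G_coef -big_split /=; apply: eq_bigr => [[j hj]] _ /=.
rewrite -mulrDr; congr (_ * _).
have -> : (n.+1 < j)%N = false by apply/negbTE; rewrite -leqNgt.
rewrite !Dser_coef //; last by apply: leq_ltn_trans (leq_subr _ _) _.
  case: ltnP => hjn; last by rewrite addr0.
  by [].
by apply: leq_ltn_trans (leq_subr _ _) _.
Qed.

Lemma sum_delta_nat (F : fieldType) n i (G : nat -> F) : (i < n)%N ->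
  \sum_(k < n) (k == i :> nat)%:R * G k = G i.
Proof.
move=> hi; rewrite (bigD1 (Ordinal hi)) //= eqxx mul1r big1 ?addr0 //.
move=> k hk; suff -> : (k == i :> nat) = false by rewrite mul0r.
by apply/negbTE; apply: contra hk => /eqP e; apply/eqP; apply: val_inj.
Qed.

Lemma det_hess (F : fieldType) m (a b : F) (L : 'I_m.+1 -> F) (M : 'M[F]_m.+1) :
  a != 0 ->
  (forall i j : 'I_m.+1, (i < m)%N ->
     M i j = if i == j :> nat then a else if i.+1 == j :> nat then b else 0) ->
  (forall j, M ord_max j = L j) ->
  \det M = a ^+ m * \sum_(k < m.+1) L k * (- b / a) ^+ (m - k).
Proof.
move=> a0 hM hL.
set r := - b / a.
set Cf := fun k j : nat => if (k <= j)%N then r ^+ (j - k) else 0.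
pose C : 'M[F]_m.+1 := \matrix_(k, j) Cf k j.
have detC : \det C = 1.
  rewrite -det_tr det_trig.
    by rewrite big1 // => i _; rewrite !mxE /Cf leqnn subnn expr0.
  apply/is_trig_mxP => i j hij; rewrite !mxE /Cf.
  by rewrite leqNgt hij.
have row_i : forall (i j : 'I_m.+1), (i < m)%N ->
    (M *m C) i j = a * Cf i j + b * Cf i.+1 j.
  move=> i j hi; rewrite !mxE.
  under eq_bigr => k _ do rewrite hM // mxE.
  have -> : \sum_(k < m.+1) (if i == k :> nat then a else if i.+1 == k :> nat then b else 0) * Cf k j
     = \sum_(k < m.+1) ((k == i :> nat)%:R * (a * Cf k j) + (k == i.+1 :> nat)%:R * (b * Cf k j)).
    apply: eq_bigr => k _; rewrite ![(nat_of_ord k == _)]eq_sym.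
    case: eqP => [e|_]; first by rewrite -e (gtn_eqF (ltnSn i)) /=; ring.
    by case: eqP => _ /=; ring.
  rewrite big_split /= (sum_delta_nat (fun k => a * Cf k j)) // (sum_delta_nat (fun k => b * Cf k j)) //; exact: ltnW.
have trig : is_trig_mx (M *m C).
  apply/is_trig_mxP => i j hij.
  have him : (i < m)%N by apply: leq_trans hij _; rewrite -ltnS.
  rewrite row_i // /Cf (ltnW hij) hij.
  have -> : (j - i = (j - i.+1).+1)%N by rewrite subnSK.
  rewrite exprS /r; field.
  exact: a0.
rewrite -(mulr1 (\det M)) -detC -det_mulmx det_trig //.
rewrite big_ord_recr /=.
have -> : \prod_(i < m) (M *m C) (widen_ord (leqnSn m) i) (widen_ord (leqnSn m) i)
   = a ^+ m.
  rewrite -[m in a ^+ m]card_ord -prodr_const; apply: eq_bigr => i _.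
  rewrite row_i /= //= /Cf leqnn subnn expr0 ltnn; ring.
congr (_ * _); rewrite !mxE; apply: eq_bigr => k _.
by rewrite hL mxE /Cf -ltnS ltn_ord.
Qed.

Definition lt_g (F : fieldType) (x y : F) (n j l : nat) : F :=
  (binZ l j * binZ (n%:Z + j%:Z - 1 - l%:Z) j)%:R
     * x ^ (l%:Z - j%:Z) * y ^ (n%:Z - 1 - l%:Z)
  + (binZ l j * binZ (n%:Z + j%:Z - l%:Z) j)%:R
     * x ^ (l%:Z - j%:Z) * y ^ (n%:Z - l%:Z).

Lemma big_shift (F : fieldType) (G : nat -> F) k N : (k <= N)%N ->
  \sum_(k <= l < N) G l = \sum_(a < N - k) G (a + k)%N.
Proof. by move=> _; rewrite -{1}[k]add0n big_addn big_mkord. Qed.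

Lemma match_S (F : fieldType) (x y : F) m k : (k < m)%N ->
  \sum_(k <= l < m.+2) lt_g x y m.+1 k l = Dc x y k (m.+1 - k) + Dc x y k (m - k).
Proof.
move=> hk; rewrite big_shift; last by lia.
have -> : (m.+2 - k = (m.+1 - k).+1)%N by lia.
rewrite /lt_g big_split /= addrC; congr (_ + _).
  apply: eq_bigr => [[a ha]] _ /=.
  have e1 : (a + k)%:Z - k%:Z = a%:Z by lia.
  have e2 : m.+1%:Z + k%:Z - (a + k)%:Z = (m.+1 - a)%N%:Z by lia.
  have e3 : m.+1%:Z - (a + k)%:Z = (m.+1 - k - a)%N%:Z by lia.
  rewrite e1 e2 e3 /= -!exprnP.
  have -> : 'C(a + k, k) = 'C(k + a, a).
    have h : 'C(k + a, a) = 'C(k + a, k + a - k) by rewrite addKn.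
    by rewrite h bin_sub ?leq_addr // addnC.
  have -> : 'C(m.+1 - a, k) = 'C(k + (m.+1 - k - a), m.+1 - k - a).
    have -> : (k + (m.+1 - k - a) = m.+1 - a)%N by lia.
    have -> : (m.+1 - k - a = (m.+1 - a) - k)%N by lia.
    by rewrite bin_sub //; lia.
  rewrite natrM; ring.
rewrite big_ord_recr /=.
have -> : (m.+1 - k = (m - k).+1)%N by lia.
rewrite [X in _ + X](_ : _ = 0) ?addr0.
  apply: eq_bigr => [[a ha]] _ /=.
  have e1 : (a + k)%:Z - k%:Z = a%:Z by lia.
  have e2 : m.+1%:Z + k%:Z - 1 - (a + k)%:Z = (m - a)%N%:Z by lia.
  have e3 : m.+1%:Z - 1 - (a + k)%:Z = (m - k - a)%N%:Z by lia.
  rewrite e1 e2 e3 /= -!exprnP.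
  have -> : 'C(a + k, k) = 'C(k + a, a).
    have h : 'C(k + a, a) = 'C(k + a, k + a - k) by rewrite addKn.
    by rewrite h bin_sub ?leq_addr // addnC.
  have -> : 'C(m - a, k) = 'C(k + (m - k - a), m - k - a).
    have -> : (k + (m - k - a) = m - a)%N by lia.
    have -> : (m - k - a = (m - a) - k)%N by lia.
    by rewrite bin_sub //; lia.
  rewrite natrM; ring.
have -> : m.+1%:Z + k%:Z - 1 - ((m - k).+1 + k)%N%:Z = k%:Z - 1 by lia.
case: k hk => [|k] hk /=; first by rewrite muln0 mul0r mul0r.
rewrite (@bin_small (k.+1 - 1)) ?muln0 ?mul0r //; lia.

Qed.

Definition Ae_g (F : fieldType) (x y : F) (n i j : nat) : F :=
  if (i == j) && (i < n.-1)%N then (1 + x) * (1 + y) / (x * y)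
  else if (i.+1 == j) && (i < n.-1)%N then - (x * y)^-1
  else if (i == n.-1) && (j == n.-1) then (x * y - (n.-1)%:R * (x + y)) / (x * y)
  else if (i == n.-1) && (j < n.-1)%N then
    (-1) ^+ (n + j) / (x * y) * \sum_(j <= l < n.+1) lt_g x y n j l
  else 0.

Lemma A_eq n : A n = \matrix_(i < n, j < n) Ae_g xF yF n i j.
Proof. by []. Qed.

Lemma Dc0 (F : fieldType) (x y : F) j : Dc x y j 0 = 1.
Proof. by rewrite /Dc big_ord_recr big_ord0 /= !bin0 !expr0 !mulr1 add0r. Qed.

Lemma Dc1 (F : fieldType) (x y : F) j : Dc x y j 1 = (j.+1)%:R * (x + y).
Proof.
rewrite /Dc !big_ord_recr big_ord0 /= !addn0 !bin0 !addn1 bin1 !expr0 !expr1.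
ring.
Qed.

Lemma term_id (F : fieldType) (r u d S : F) m k : r * u = 1 -> (k <= m)%N ->
  (-1) ^+ (m.+1 + k) * d * S * r ^+ (m - k) = (- (-1) ^+ m * d * r ^+ m) * ((- u) ^+ k * S).
Proof.
move=> ru hk.
have e : r ^+ m = r ^+ (m - k) * r ^+ k by rewrite -exprD subnK.
have h : r ^+ k * u ^+ k = 1 by rewrite -exprMn ru expr1n.
have hh : (-1) ^+ k * (-1) ^+ k = 1 :> F by rewrite -expr2 sqrr_sign.
rewrite e (exprNn u) exprD exprS.
set s := (-1) ^+ k; set t := r ^+ k; set v := u ^+ k.
set P := (-1) ^+ m; set q := r ^+ (m - k).
transitivity (-1 * P * s * d * S * q * (t * v)); first by rewrite h mulr1; ring.
ring.
Qed.

Lemma main_g (F : fieldType) (x y : F) m : x != 0 -> y != 0 -> (1 + x) * (1 + y) != 0 ->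
  \det (\matrix_(i < m.+1, j < m.+1) Ae_g x y m.+1 i j) = 1.
Proof.
move=> x0 y0 u0.
have xy0 : x * y != 0 by rewrite mulf_neq0.
rewrite (@det_hess F m ((1 + x) * (1 + y) / (x * y)) (- (x * y)^-1)
   (fun j => Ae_g x y m.+1 m j)); first last.
- by move=> j; rewrite mxE.
- move=> i j hi; rewrite mxE /Ae_g /= hi !andbT.
  by rewrite (ltn_eqF hi).
- by rewrite mulf_neq0 // invr_neq0.
set u := (1 + x) * (1 + y).
have -> : - - (x * y)^-1 / (u / (x * y)) = u^-1.
  by field; rewrite u0 x0 y0.
have ru : u^-1 * u = 1 by rewrite mulVf.
rewrite big_ord_recr /=.
rewrite (eq_bigr (fun i : 'I_m => (- (-1) ^+ m * (x * y)^-1 * u^-1 ^+ m) *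
   ((- u) ^+ i * (Dc x y i (m.+1 - i) + Dc x y i (m - i))))); last first.
  move=> [i hi] _ /=.
  rewrite /Ae_g /= ltnn andbF (ltn_eqF hi) hi /= !andbF eqxx /= match_S // (term_id (u := u)) //; exact: ltnW.
rewrite -mulr_sumr.
have S := series_id x y (ltn0Sn m).
rewrite !big_ord_recr /= -/u in S.
rewrite (eq_bigr (fun i : 'I_m => (- u) ^+ i * (Dc x y i (m.+1 - i) + Dc x y i (m - i)))) in S; last first.
  by move=> [i hi] _ /=; rewrite ltnS (ltnW hi).
rewrite ltnSn ltnn subSnn !subnn Dc1 !Dc0 addr0 mulr1 in S.
set T := \sum_(i < m) _ in S *.
have Te : T = (- (x * y)) ^+ m.+1 - (- u) ^+ m * (m.+1%:R * (x + y) + 1) - (- u) ^+ m.+1.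
  by rewrite -S; ring.
rewrite Te /Ae_g /= eqxx ltnn !andbF /= subnn expr0 mulr1.
rewrite (exprS (- (x * y)) m) (exprS (- u) m) (exprNn (x * y)) (exprNn u) expr_div_n exprVn.
rewrite -natr1.
have U0 : u ^+ m != 0 by rewrite expf_neq0.
have X0 : (x * y) ^+ m != 0 by rewrite expf_neq0.
have PP : (-1) ^+ m * (-1) ^+ m = 1 :> F by rewrite -expr2 sqrr_sign.
move: U0 X0 PP.
set P := (-1) ^+ m; set U := u ^+ m; set X := (x * y) ^+ m => U0 X0 PP.
transitivity (U / X * (- (P * P) / (x * y) * U^-1 *
   (- (x * y) * X - U * ((m%:R + 1) * (x + y) + 1) + u * U)
   + (x * y - m%:R * (x + y)) / (x * y))).
  ring.
by rewrite PP /u; field; rewrite x0 y0 U0 X0.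
Qed.

Lemma oneX_neq0 (R : idomainType) : (1 + 'X : {poly R}) != 0.
Proof.
apply/eqP => h; have := congr1 (fun p : {poly R} => p`_1) h.
by rewrite coefD coef1 coefX /= add0r coef0 => /eqP; rewrite oner_eq0.
Qed.

Theorem lemma6 (n : nat) : (0 < n)%N -> \det (A n) = 1.
Proof.
case: n => // m _; rewrite A_eq; apply: main_g.
- by rewrite /xF tofrac_eq0 polyC_eq0 polyX_eq0.
- by rewrite /yF tofrac_eq0 polyX_eq0.
- rewrite mulf_neq0 //.
  + rewrite /xF -tofrac1 -tofracD tofrac_eq0.
    by rewrite -polyC1 -polyCD polyC_eq0 oneX_neq0.
  + by rewrite /yF -tofrac1 -tofracD tofrac_eq0 oneX_neq0.
Qed.
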